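(* Let $(M,g)$ and $(N,h)$ be Riemannian manifolds, $\dim M=m$, and $f:M\to N$ a smooth map such that $\tilde g=g-f^*h$ is positive definite. Let $b:M\to[0,1)$ be the largest eigenvalue of $f^*h$ with respect to $g$. Let $X_1,\dots,X_m$ be a local $g$-orthonormal frame, $\tilde g_{ij}=g(X_i,X_j)-h(df(X_i),df(X_j))$ with inverse $(\tilde g^{ij})$, and define \[ W=\mathrm{trace}_{g-f^*h}(\nabla df)=\sum_{i,j}\tilde g^{ij}\nabla df(X_i,X_j)\in C^\infty(f^{-1}TN),\qquad Z=\sum_{i,j}\tilde g^{ij}h(W,df(X_i))X_j\in C^\infty(TM). \] Then $\|Z\|\leq \frac{\sqrt b}{1-b}\|W\|$ and $\|W\|\leq\frac{\sqrt m}{1-b}\|\nabla df\|$.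
   Context: $\nabla df$ is the second fundamental form of $f$ (computed with the Levi-Civita connections of $g$ and $h$), with norm $\|\nabla df\|^2=\sum_{i,j}h(\nabla df(X_i,X_j),\nabla df(X_i,X_j))$; norms of $Z$ and $W$ are taken with respect to $g$ and $h$ respectively. *)

(* Defs.v *)
From mathcomp Require Import all_boot all_order all_algebra.
From mathcomp Require Import reals.
Set Implicit Arguments. Unset Strict Implicit. Unset Printing Implicit Defensive.
Import Order.TTheory GRing.Theory Num.Theory.
Local Open Scope ring_scope.

(* Pointwise model: at a point p of M we fix a g-orthonormal frame X_1..X_m of
   T_pM and an h-orthonormal basis of T_{f(p)}N (dim n).  Then
   - df(X_i) is the row i of A : 'M_(m,n);
   - nabla df(X_i,X_j) is B i j : 'rV_n. *)

Definition dotv (R : realType) (n : nat) (u v : 'rV[R]_n) : R := (u *m v^T) 0 0.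
Definition normv (R : realType) (n : nat) (u : 'rV[R]_n) : R := Num.sqrt (dotv u u).

Definition pullback_mx (R : realType) (m n : nat) (A : 'M[R]_(m, n)) : 'M[R]_m :=
  A *m A^T.

Definition gtilde_mx (R : realType) (m n : nat) (A : 'M[R]_(m, n)) : 'M[R]_m :=
  1%:M - pullback_mx A.

Definition posdef_mx (R : realType) (m : nat) (S : 'M[R]_m) : Prop :=
  forall v : 'rV[R]_m, v != 0 -> 0 < (v *m S *m v^T) 0 0.

Definition largest_eigenvalue (R : realType) (m : nat) (S : 'M[R]_m) (b : R) : Prop :=
  eigenvalue S b /\ (forall a : R, eigenvalue S a -> a <= b).

Definition Wvec (R : realType) (m n : nat) (A : 'M[R]_(m, n))
  (B : 'I_m -> 'I_m -> 'rV[R]_n) : 'rV[R]_n :=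
  \sum_(i < m) \sum_(j < m) (invmx (gtilde_mx A)) i j *: B i j.

Definition Zvec (R : realType) (m n : nat) (A : 'M[R]_(m, n))
  (B : 'I_m -> 'I_m -> 'rV[R]_n) : 'rV[R]_m :=
  \row_(j < m) \sum_(i < m) (invmx (gtilde_mx A)) i j * dotv (Wvec A B) (row i A).

Definition norm2ff (R : realType) (m n : nat) (B : 'I_m -> 'I_m -> 'rV[R]_n) : R :=
  Num.sqrt (\sum_(i < m) \sum_(j < m) dotv (B i j) (B i j)).

(* Main.v *)
Require Import Defs.
From mathcomp Require Import all_boot all_order all_algebra.
From mathcomp Require Import reals ring lra.
From mathcomp Require Import complex.
Import Order.TTheory GRing.Theory Num.Theory.
Local Open Scope ring_scope.

Lemma cs_sum (R : realFieldType) (I : finType) (a c : I -> R) :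
  (\sum_i a i * c i)^+2 <= (\sum_i a i ^+2) * (\sum_i c i ^+2).
Proof.
set A := \sum_i a i ^+ 2; set Bc := \sum_i a i * c i; set Cc := \sum_i c i ^+ 2.
have key t : 0 <= t^+2 * A - 2 * t * Bc + Cc.
  have -> : t^+2 * A - 2 * t * Bc + Cc = \sum_i (t * a i - c i)^+2.
    rewrite (eq_bigr (fun i => t^+2 * a i ^+2 - 2 * t * (a i * c i) + c i ^+2));
      last by move=> i _; ring.
    by rewrite big_split /= big_split /= sumrN -!mulr_sumr.
  by apply: sumr_ge0 => i _; apply: sqr_ge0.
have A0 : 0 <= A by apply: sumr_ge0 => i _; apply: sqr_ge0.
have C0 : 0 <= Cc by apply: sumr_ge0 => i _; apply: sqr_ge0.
have [Ae|Ane] := eqVneq A 0.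
  have ha : forall i, a i = 0.
    move=> i; have /psumr_eq0P h := Ae.
    by apply/eqP; rewrite -sqrf_eq0; apply/eqP; apply: h => // j _; apply: sqr_ge0.
  rewrite /Bc (eq_bigr (fun _ => 0)); last by move=> i _; rewrite ha mul0r.
  by rewrite big1 // expr0n /= Ae mul0r.
have Ap : 0 < A by rewrite lt_def Ane A0.
have := key (Bc / A); set u := Bc / A => h.
have e : u * A = Bc by rewrite /u mulfVK.
nra.
Qed.

Section Dot.
Context {R : realType} {n : nat}.
Implicit Types u v : 'rV[R]_n.

Lemma dotvE u v : dotv u v = \sum_k u 0 k * v 0 k.
Proof. by rewrite /dotv mxE; apply: eq_bigr => k _; rewrite mxE. Qed.

Lemma dotvv u : dotv u u = \sum_k u 0 k ^+ 2.
Proof. by rewrite dotvE; apply: eq_bigr => k _; rewrite expr2. Qed.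

Lemma dotv_ge0 u : 0 <= dotv u u.
Proof. by rewrite dotvv; apply: sumr_ge0 => k _; apply: sqr_ge0. Qed.

Lemma dotv_eq0 u : dotv u u = 0 -> u = 0.
Proof.
rewrite dotvv => /psumr_eq0P h; apply/rowP => k; rewrite mxE.
by apply/eqP; rewrite -sqrf_eq0; apply/eqP; apply: h => // j _; apply: sqr_ge0.
Qed.

Lemma normv_sqr u : normv u ^+ 2 = dotv u u.
Proof. by rewrite /normv sqr_sqrtr // dotv_ge0. Qed.

Lemma normv_ge0 u : 0 <= normv u.
Proof. exact: sqrtr_ge0. Qed.

Lemma cs_dot u v : dotv u v ^+ 2 <= dotv u u * dotv v v.
Proof. rewrite dotvE !dotvv; exact: cs_sum. Qed.

Lemma cs_norm u v : dotv u v <= normv u * normv v.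
Proof.
apply: (le_trans (ler_norm _)).
rewrite /normv -sqrtrM ?dotv_ge0 // -sqrtr_sqr; apply: ler_wsqrtr.
exact: cs_dot.
Qed.

Lemma dotvC u v : dotv u v = dotv v u.
Proof. by rewrite !dotvE; apply: eq_bigr => k _; rewrite mulrC. Qed.
End Dot.
Section Ray.
Context {R : realType}.
Local Notation C := (R[i]).
Local Notation phi := (real_complex R).

Lemma eig_transfer m (S : 'M[R]_m) (r : R) :
  eigenvalue (map_mx phi S) (phi r) -> eigenvalue S r.
Proof.
by rewrite !eigenvalue_root_char -map_char_poly fmorph_root.
Qed.

Local Open Scope sesquilinear_scope.

Lemma herm_SC {m} {S : 'M[R]_m} : S^T = S -> map_mx phi S \is hermsymmx.
Proof.
move=> hS; apply/is_hermitianmxP; rewrite expr0 scale1r.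
apply/matrixP => i j; rewrite !mxE -[in LHS]hS mxE conj_Creal //.
by apply/complex_realP; eexists.
Qed.

Lemma rayleigh m (S : 'M[R]_m) (b : R) : S^T = S -> largest_eigenvalue S b ->
  forall x : 'rV[R]_m, (x *m S *m x^T) 0 0 <= b * (x *m x^T) 0 0.
Proof.
move=> hS [_ hb] x.
set SC := map_mx phi S.
have hh := herm_SC hS.
have Pu := spectral_unitarymx SC.
have PU := spectral_unit SC.
set P := spectralmx SC in Pu PU.
set d := spectral_diag SC.
have /orthomx_spectralP hSC := hermitian_normalmx hh.
rewrite -/P -/d in hSC.
have dreal := hermitian_spectral_diag_real hh; rewrite -/d in dreal.
have dk k : exists r, d 0 k = phi r /\ r <= b.
  have /mxOverP /(_ 0 k) /complex_realP [r hr] := dreal.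
  exists r; split => //; apply: hb; apply: eig_transfer; rewrite -hr.
  apply/eigenvalueP; exists (row k P).
    rewrite -row_mul.
    have -> : P *m SC = diag_mx d *m P.
      by rewrite /SC {1}hSC !mulmxA mulmxV // mul1mx.
    by rewrite row_mul row_diag_mx -scalemxAl -rowE.
  apply/eqP => h0.
  have := mulmxV PU; move/(congr1 (row k)); rewrite row_mul h0 mul0mx.
  move/rowP => /(_ k); rewrite !mxE eqxx /=. 
  by move/eqP; rewrite eq_sym oner_eq0.
rewrite -lecR rmorphM.
have ent (M : 'M[R]_1) : phi (M 0 0) = (map_mx phi M) 0 0 by rewrite mxE.
rewrite !ent !map_mxM -map_trmx -/SC /SC hSC invmx_unitary //.
set xC := map_mx phi x.
have ey : P *m xC^T = (xC *m P^t* )^t*.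
  rewrite trmx_mul map_mxM trmxCK; congr (_ *m _).
  apply/matrixP => i j; rewrite !mxE; symmetry; apply: conj_Creal.
  by apply/complex_realP; eexists.
pose y := xC *m P^t*.
have e2 : xC *m xC^T = y *m y^t*.
  by rewrite /y -ey mulmxA mulmxKtV.
have e1 : xC *m (P^t* *m diag_mx d *m P) *m xC^T = y *m diag_mx d *m y^t*.
  by rewrite /y -ey !mulmxA.
rewrite e1 [X in _ <= _ * X]ent map_mxM -!map_trmx -/xC e2; clearbody y.
rewrite mul_mx_diag !mxE mulr_sumr; apply: ler_sum => k _.
rewrite !mxE; have [r [-> rb]] := dk k.
rewrite mulrAC [X in X <= _]mulrC.
by apply: ler_wpM2r; [rewrite mul_conjC_ge0 | rewrite lecR].
Qed.
End Ray.

Lemma dotv_mx (R : realType) m (x y : 'rV[R]_m) (M : 'M[R]_m) :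
  dotv (x *m M) y = (x *m M *m y^T) 0 0.
Proof. by []. Qed.

Theorem lemma2p2 (R : realType) (m n : nat) (A : 'M[R]_(m, n))
  (B : 'I_m -> 'I_m -> 'rV[R]_n) (b : R) :
  (forall i j, B i j = B j i) ->
  posdef_mx (gtilde_mx A) ->
  largest_eigenvalue (pullback_mx A) b ->
  normv (Zvec A B) <= Num.sqrt b / (1 - b) * normv (Wvec A B) /\
  normv (Wvec A B) <= Num.sqrt (m%:R) / (1 - b) * norm2ff B.
Proof.
move=> _ hpos hL.
set S := pullback_mx A.
set G := gtilde_mx A.
have hS : S^T = S by rewrite /S /pullback_mx trmx_mul trmxK.
have ray := @rayleigh R m S b hS hL.
have SA (x : 'rV[R]_m) : (x *m S *m x^T) 0 0 = dotv (x *m A) (x *m A).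
  by rewrite /dotv /S /pullback_mx trmx_mul !mulmxA.
have GE (x y : 'rV[R]_m) : (x *m G *m y^T) 0 0 = dotv x y - (x *m S *m y^T) 0 0.
  by rewrite /G /gtilde_mx mulmxBr mulmx1 mulmxBl [LHS]mxE [X in _ + X]mxE.
have [b1 b0] : 0 < 1 - b /\ 0 <= b.
  case: hL => /eigenvalueP [v hv vn0] _.
  have vv : 0 < dotv v v.
    rewrite lt_def dotv_ge0 andbT; apply/eqP => /dotv_eq0 h; by rewrite h eqxx in vn0.
  have e : (v *m S *m v^T) 0 0 = b * dotv v v by rewrite hv -scalemxAl mxE.
  split.
    have := hpos v vn0; rewrite GE e => h; nra.
  have := dotv_ge0 (v *m A); rewrite -SA e => h; nra.
have Gu : G \in unitmx.
  rewrite -row_free_unit -kermx_eq0; apply/eqP/row_matrixP => i.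
  rewrite row0; apply/eqP; apply/negP => /negP hi.
  have := hpos _ hi; rewrite -row_mul mulmx_ker row0 mul0mx mxE ltxx //.
have invb (x : 'rV[R]_m) : normv (x *m invmx G) <= normv x / (1 - b).
  set y := x *m invmx G.
  have xe : x = y *m G by rewrite /y mulmxKV.
  have h1 : (1 - b) * dotv y y <= dotv x y.
    rewrite xe dotv_mx GE; have r := ray y; change ((y *m y^T) 0 0) with (dotv y y) in r; lra.
  have h2 := cs_norm x y.
  rewrite -(normv_sqr y) in h1.
  have ny0 := normv_ge0 y; have nx0 := normv_ge0 x.
  rewrite ler_pdivlMr //.
  have [->|nyp] := eqVneq (normv y) 0; first by rewrite mul0r.
  have nyq : 0 < normv y by rewrite lt_def nyp ny0.
  nra.
split.
-
  set W := Wvec A B.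
  set v := W *m A^T.
  have Ze : Zvec A B = v *m invmx G.
    apply/rowP => j; rewrite !mxE; apply: eq_bigr => i _.
    rewrite mulrC; congr (_ * _); rewrite /dotv !mxE; apply: eq_bigr => k _.
    by rewrite !mxE.
  have hv : dotv v v <= b * dotv W W.
    have e1 : dotv v v = dotv W (v *m A).
      by rewrite /dotv [in RHS]trmx_mul mulmxA.
    have h1 := cs_dot W (v *m A).
    have h2 := ray v; rewrite SA in h2; change ((v *m v^T) 0 0) with (dotv v v) in h2.
    rewrite -e1 in h1.
    have p0 := dotv_ge0 v; have q0 := dotv_ge0 W; have c0 := dotv_ge0 (v *m A).
    have [pz|pnz] := eqVneq (dotv v v) 0; first by rewrite pz; apply: mulr_ge0.
    have pp : 0 < dotv v v by rewrite lt_def pnz p0.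
    nra.
  rewrite Ze; apply: (le_trans (invb v)).
  rewrite mulrAC ler_pdivrMr // divfK ?(gt_eqF b1) //.
  rewrite /normv -sqrtrM //; apply: ler_wsqrtr; exact: hv.
-
  set W := Wvec A B; set Gi := invmx G.
  have nd (i : 'I_m) : normv (delta_mx 0 i : 'rV[R]_m) = 1.
    rewrite /normv dotvv (bigD1 i) //= big1 ?addr0.
      by rewrite mxE !eqxx expr1n sqrtr1.
    by move=> j hj; rewrite mxE eqxx /= (negbTE hj) expr0n.
  have hrow (i : 'I_m) : \sum_j Gi i j ^+ 2 <= ((1 - b)^-1) ^+ 2.
    have := invb (delta_mx 0 i); rewrite nd mul1r -rowE => h.
    have -> : \sum_j Gi i j ^+ 2 = normv (row i Gi) ^+ 2.
      by rewrite normv_sqr dotvv; apply: eq_bigr => j _; rewrite mxE.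
    have := normv_ge0 (row i Gi); nra.
  have G2 : \sum_i \sum_j Gi i j ^+ 2 <= m%:R * ((1 - b)^-1) ^+ 2.
    apply: (le_trans (ler_sum _ (fun i _ => hrow i))).
    by rewrite sumr_const card_ord mulr_natl.
  have Wk k : W 0 k = \sum_(p : 'I_m * 'I_m) Gi p.1 p.2 * B p.1 p.2 0 k.
    rewrite /W /Wvec summxE.
    under eq_bigr => i _ do rewrite summxE.
    by rewrite pair_bigA /=; apply: eq_bigr => p _; rewrite mxE.
  set N := \sum_i \sum_j dotv (B i j) (B i j).
  have WW : dotv W W <= (\sum_i \sum_j Gi i j ^+ 2) * N.
    rewrite dotvv; under eq_bigr => k _ do rewrite Wk.
    apply: (le_trans (y := \sum_k (\sum_(p : 'I_m * 'I_m) Gi p.1 p.2 ^+2) *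
       (\sum_(p : 'I_m * 'I_m) B p.1 p.2 0 k ^+ 2))).
      by apply: ler_sum => k _; apply: cs_sum.
    rewrite -mulr_sumr [X in _ <= X * _]pair_bigA /=.
    apply: ler_wpM2l; first by apply: sumr_ge0 => p _; apply: sqr_ge0.
    rewrite exchange_big /N [in X in _ <= X]pair_bigA /=.
    by apply: ler_sum => p _; rewrite dotvv.
  have N0 : 0 <= N.
    by apply: sumr_ge0 => i _; apply: sumr_ge0 => j _; apply: dotv_ge0.
  have WW2 : dotv W W <= m%:R * ((1 - b)^-1) ^+ 2 * N.
    apply: (le_trans WW); apply: ler_wpM2r => //.
  rewrite /normv /norm2ff -/N.
  apply: (le_trans (ler_wsqrtr WW2)).
  have t0 : 0 <= (1 - b)^-1 by rewrite invr_ge0 ltW.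
  rewrite sqrtrM ?mulr_ge0 ?exprn_ge0 // sqrtrM // sqrtr_sqr ger0_norm //.
Qed.
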